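(* Let $G$ be a finite graph that admits a Kasteleyn signing (for example, any planar graph). If $C_1,\dots,C_n$ are channels of $G$ that are linearly independent in the $\mathbf{Z}/2\mathbf{Z}$-vector space $\mathcal{C}(G)$, then $2^n$ divides $m_G^2$. In particular, $|\mathcal{C}(G)|$ divides $m_G^2$. If moreover $G$ is bipartite and admits a bipartite Kasteleyn signing (for example, $G$ is bipartite and planar), and $C_1,\dots,C_n\in\mathcal{C}_B(G)$ are linearly independent, then $2^n$ divides $m_G$.
   Context: All graphs are finite, undirected, without self-loops, with at most one edge between two vertices. $m_G$ denotes the number of perfect matchings of $G$. For a vertex $v$, $N(v)$ is its set of neighbours. A channel of $G=(V,E)$ is a set $C\subseteq V$ such that $|N(v)\cap C|$ is even for every $v\in V$ (the empty set is a channel). $\mathcal{C}(G)$ is the set of channels; it is a vector space over $\mathbf{Z}/2\mathbf{Z}$ with addition given by symmetric difference. If $G$ is bipartite with vertices colored black and white, $\mathcal{C}_B(G)$ (resp. $\mathcal{C}_W(G)$) denotes the subspace of channels consisting only of black (resp. white) vertices. A Kasteleyn signing of $G$ with adjacency matrix $A=(a_{ij})$ is a matrix $K=(\pm a_{ij})$ (obtained by changing signs of some entries) with $\det K=m_G^2$. For bipartite $G$, the bipartite adjacency matrix $B$ is the submatrix of $A$ with rows indexed by white and columns by black vertices; a bipartite Kasteleyn signing is a matrix $H=(\pm b_{ij})$ with $\det H=m_G$ (when $B$ is square; if $B$ is not square, $m_G=0$). *)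

(* Defs.v *)
From HB Require Import structures.
From mathcomp Require Import all_boot all_order all_algebra.
Set Implicit Arguments. Unset Strict Implicit. Unset Printing Implicit Defensive.
Import GRing.Theory Num.Theory.

Definition simple_graph (N : nat) (e : rel 'I_N) : Prop :=
  (forall x y, e x y = e y x) /\ (forall x, e x x = false).

Definition nbhd (N : nat) (e : rel 'I_N) (v : 'I_N) : {set 'I_N} :=
  [set u | e v u].

Definition perfect_matching (N : nat) (e : rel 'I_N) (M : {set {set 'I_N}}) : bool :=
  [forall A in M, exists x, exists y, e x y && (A == [set x; y])] &&
  [forall v, #|[set A in M | v \in A]| == 1%N].

Definition num_pm (N : nat) (e : rel 'I_N) : nat :=
  #|[set M : {set {set 'I_N}} | perfect_matching e M]|.

Definition is_channel (N : nat) (e : rel 'I_N) (C : {set 'I_N}) : bool :=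
  [forall v, ~~ odd #|nbhd e v :&: C|].

(* Addition in the Z/2Z-vector space of subsets: symmetric difference. *)
Definition symdiff (T : finType) (A B : {set T}) : {set T} :=
  (A :\: B) :|: (B :\: A).

(* Linear independence over Z/2Z of a family C_1..C_k: the only subfamily
   (coefficient vector in {0,1}^k) summing to zero is the empty one. *)
Definition lin_indep (T : finType) (k : nat) (C : 'I_k -> {set T}) : Prop :=
  forall S : {set 'I_k}, \big[@symdiff T/set0]_(i in S) C i = set0 -> S = set0.

Definition adj_mx (N : nat) (e : rel 'I_N) : 'M[int]_N :=
  \matrix_(i, j) ((e i j)%:R)%R.

Definition kasteleyn_signing (N : nat) (e : rel 'I_N) (K : 'M[int]_N) : Prop :=
  (forall i j, K i j = adj_mx e i j \/ K i j = (- adj_mx e i j)%R) /\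
  (\det K)%R = (Posz ((num_pm e) ^ 2)).

(* Bipartite graphs: a colouring col (true = black, false = white) such that
   every edge joins vertices of different colours. *)
Definition proper_2col (N : nat) (e : rel 'I_N) (col : 'I_N -> bool) : Prop :=
  forall x y, e x y -> col x != col y.

Definition blacks (N : nat) (col : 'I_N -> bool) : {set 'I_N} := [set v | col v].
Definition whites (N : nat) (col : 'I_N -> bool) : {set 'I_N} := [set v | ~~ col v].

(* Bipartite adjacency matrix: rows indexed by white vertices, columns by
   black vertices (each enumerated in the increasing order of 'I_N). *)
Definition bip_adj_mx (N : nat) (e : rel 'I_N) (col : 'I_N -> bool)
  : 'M[int]_(#|whites col|, #|blacks col|) :=
  \matrix_(i, j) ((e (enum_val i) (enum_val j))%:R)%R.

(* Bipartite Kasteleyn signing: a sign change of B with det H = m_G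
   (the determinant condition only makes sense when B is square). *)
Definition bip_kasteleyn_signing (N : nat) (e : rel 'I_N) (col : 'I_N -> bool)
  (H : 'M[int]_(#|whites col|, #|blacks col|)) : Prop :=
  (forall i j, H i j = bip_adj_mx e col i j \/ H i j = (- bip_adj_mx e col i j)%R) /\
  (forall h : #|whites col| = #|blacks col|,
     (\det (castmx (h, erefl #|blacks col|) H) = (Posz (num_pm e)))%R).

(* Main.v *)
Require Import Defs.
From HB Require Import structures.
From mathcomp Require Import all_boot all_order all_algebra.
Set Implicit Arguments. Unset Strict Implicit. Unset Printing Implicit Defensive.
Import GRing.Theory Num.Theory.
Local Open Scope ring_scope.
Lemma F2opp (x : 'F_2) : - x = x.
Proof. by apply/eqP; case: x => [[|[|]]] //. Qed.
Lemma F2nat (n : nat) : (n%:R : 'F_2) = (odd n)%:R.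
Proof. by rewrite -(@Fp_nat_mod 2) // modn2. Qed.
Lemma F2int (z : int) : (z%:~R : 'F_2) = (odd `|z|%N)%:R.
Proof.
case: z => n; first by rewrite -F2nat.
by rewrite NegzE mulrNz F2opp -F2nat.
Qed.
Lemma det_even_rows N' n (Q : 'M[int]_N') : (n <= N')%N ->
  (forall (i : 'I_N') j, (i < n)%N -> (2 %| Q i j)%Z) -> (2 ^ n %| `|\det Q|)%N.
Proof.
move=> le hQ.
pose d : 'rV[int]_N' := \row_i (if (i < n)%N then 2 else 1).
pose Q' := \matrix_(i,j) (if (i < n)%N then (Q i j %/ 2)%Z else Q i j).
have -> : Q = diag_mx d *m Q'.
  apply/matrixP => i j; rewrite mul_diag_mx !mxE; case: ifP => h.
    by rewrite mulrC divzK // hQ.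
  by rewrite mul1r.
rewrite det_mulmx det_diag abszM; apply: dvdn_mulr.
have -> : \prod_i d 0 i = \prod_(i < n) (2 : int).
  have h := @big_ord_widen_cond _ 1 *%R n N' xpredT (fun _ => 2 : int) le.
  rewrite /= in h; rewrite h [RHS]big_mkcond /=; apply: eq_bigr => i _; rewrite mxE.
  by case: ifP.
by rewrite prodr_const card_ord abszX.
Qed.
Lemma key N' (K : 'M[int]_N') n (M : 'M['F_2]_(n, N')) :
  row_free M -> M *m map_mx (intr : int -> 'F_2) K = 0 -> (2 ^ n %| `|\det K|)%N.
Proof.
move=> rf hMK.
have rk : \rank M = n by apply/eqP.
have le : (n <= N')%N by rewrite -rk rank_leq_col.
set K2 := map_mx (intr : int -> 'F_2) K in hMK *.
have eM := mulmx_ebase M; rewrite rk in eM.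
set U := row_ebase M in eM *; set L := col_ebase M in eM *.
have hpid : pid_mx n *m U = invmx L *m M.
  by rewrite -eM !mulmxA mulVmx ?col_ebase_unit // mul1mx.
have hrow : forall (i : 'I_N') j, (i < n)%N -> (U *m K2) i j = 0.
  move=> i j lt.
  have := congr1 (fun A => (A *m K2) (Ordinal lt) j) hpid.
  rewrite -mulmxA -[_ *m M *m K2]mulmxA hMK mulmx0 (pid_mxErow _ le) mul_rowsub_mx mul1mx !mxE /=.
  have -> : widen_ord le (Ordinal lt) = i by apply: val_inj.
  by [].
pose P : 'M[int]_N' := \matrix_(i, j) ((U i j : nat)%:Z).
have hP : map_mx (intr : int -> 'F_2) P = U.
  by apply/matrixP => i j; rewrite !mxE /= -pmulrn natr_Zp.
have hQ : forall (i : 'I_N') j, (i < n)%N -> (2 %| (P *m K) i j)%Z.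
  move=> i j lt; have := hrow i j lt.
  rewrite -hP -map_mxM mxE => h.
  have : ((P *m K) i j)%:~R = 0 :> 'F_2 := h.
  rewrite F2int dvdzE /= dvdn2.
  by case: (odd _) => //; move/eqP; rewrite oner_eq0.
have := det_even_rows le hQ.
rewrite det_mulmx abszM Gauss_dvdr // coprimeXl // coprime2n.
have : \det U != 0.
  by rewrite -unitfE -unitmxE row_ebase_unit.
rewrite -hP det_map_mx => h.
have : (\det P)%:~R != 0 :> 'F_2 := h.
rewrite F2int.
by case: (odd _) => //; rewrite eqxx.
Qed.

Lemma F2_01 (x : 'F_2) : x = (x != 0)%:R.
Proof. by apply/eqP; case: x => [[|[|]]] //. Qed.

Lemma F2bool_inj (a b : bool) : (a%:R : 'F_2) = b%:R -> a = b.
Proof. by case: a; case: b => //= /eqP; rewrite ?oner_eq0 // eq_sym oner_eq0. Qed.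

Lemma F2xor (a b : bool) : ((a (+) b)%:R : 'F_2) = a%:R + b%:R.
Proof. by case: a; case: b => //; apply/eqP. Qed.

Lemma F2intb (b : bool) : ((b%:R : int)%:~R : 'F_2) = b%:R.
Proof. by case: b. Qed.

Lemma sum_bool (T : finType) (b : pred T) : (\sum_x (b x : nat))%N = #|b|.
Proof.
rewrite -sum1_card [RHS]big_mkcond /=; apply: eq_bigr => x _.
by rewrite unfold_in; case: (b x).
Qed.

Section Vec.
Variables (N m : nat) (g : 'I_m -> 'I_N).

Definition vecg (C : {set 'I_N}) : 'rV['F_2]_m := \row_j ((g j \in C)%:R).

Lemma vecg_symdiff A B : vecg (symdiff A B) = vecg A + vecg B.
Proof.
apply/matrixP => i j; rewrite !mxE -F2xor; congr (_%:R).
rewrite /symdiff !inE.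
by case: (g j \in A); case: (g j \in B).
Qed.

Lemma vecg0 : vecg set0 = 0.
Proof. by apply/matrixP => i j; rewrite !mxE inE. Qed.

Lemma vecg_big k (S : {set 'I_k}) (C : 'I_k -> {set 'I_N}) :
  vecg (\big[@symdiff _/set0]_(i in S) C i) = \sum_(i in S) vecg (C i).
Proof.
exact: (big_morph vecg vecg_symdiff vecg0).
Qed.

Lemma indep_rowfree k (D : {set 'I_N}) (C : 'I_k -> {set 'I_N}) :
  (forall x, x \in D -> exists j, x = g j) -> (forall i, C i \subset D) ->
  lin_indep C -> row_free (\matrix_(i, j) ((g j \in C i)%:R : 'F_2)).
Proof.
move=> hD hC hind; apply: inj_row_free => v hv.
pose S := [set i | v 0 i != 0].
set X := \big[@symdiff _/set0]_(i in S) C i.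
have hX : vecg X = 0.
  rewrite -hv vecg_big mulmx_sum_row [RHS](bigID (fun i => i \in S)) /=.
  rewrite [Z in _ + Z]big1 ?addr0; last first.
move=> i; rewrite inE negbK => /eqP ->; by rewrite scale0r.
  apply: eq_bigr => i; rewrite inE => h.
  rewrite [v 0 i]F2_01 h scale1r.
  by apply/matrixP => a j; rewrite !mxE.
have XD : X \subset D.
  rewrite /X; elim/big_rec: _ => [|i Y _ hY]; first exact: sub0set.
  rewrite /symdiff; apply/subsetP => x.
  rewrite !inE => /orP [/andP [_ h]| /andP [_ h]].
    exact: (subsetP (hC i)).
  exact: (subsetP hY).
have X0 : X = set0.
  apply/setP => x; rewrite inE; apply/negP => xX.
  have [j hj] := hD x (subsetP XD x xX).
  have := congr1 (fun w : 'rV['F_2]_m => w ord0 j) hX; rewrite !mxE -hj xX /=.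
  by move/eqP; rewrite oner_eq0.
have S0 := hind S X0.
apply/matrixP => a i; rewrite [a]ord1 mxE.
have : i \notin S by rewrite S0 inE.
by rewrite inE negbK => /eqP.
Qed.
End Vec.

Definition A2 N (e : rel 'I_N) : 'M['F_2]_N := \matrix_(i, j) ((e i j)%:R).

Lemma chan_entry N (e : rel 'I_N) (He : simple_graph e) (C : {set 'I_N}) v :
  (vecg id C *m A2 e) 0 v = (odd #|nbhd e v :&: C|)%:R.
Proof.
rewrite !mxE.
under eq_bigr => u _ do rewrite !mxE -natrM mulnb.
rewrite -natr_sum sum_bool F2nat; congr ((odd _)%:R); apply: eq_card => u.
by rewrite !inE /= (proj1 He v u) andbC.
Qed.

Lemma is_channel_vec N (e : rel 'I_N) (He : simple_graph e) (C : {set 'I_N}) :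
  is_channel e C = (vecg id C *m A2 e == 0).
Proof.
apply/forallP/eqP.
  move=> h; apply/matrixP => i v; rewrite [i]ord1 chan_entry // mxE.
  by rewrite (negPf (h v)).
move=> h v; have := congr1 (fun w : 'rV['F_2]_N => w ord0 v) h.
rewrite chan_entry // mxE; case: (odd _) => //= /eqP; by rewrite oner_eq0.
Qed.

Lemma kast_mod2 N (e : rel 'I_N) (K : 'M[int]_N) :
  (forall i j, K i j = adj_mx e i j \/ K i j = (- adj_mx e i j)%R) ->
  map_mx (intr : int -> 'F_2) K = A2 e.
Proof.
move=> hK; apply/matrixP => i j; rewrite !mxE.
by case: (hK i j) => ->; rewrite /adj_mx mxE ?mulrNz ?F2opp F2intb.
Qed.

Lemma part12 N (e : rel 'I_N) (He : simple_graph e)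
  (HK : exists K : 'M[int]_N, kasteleyn_signing e K) :
  (forall (n : nat) (C : 'I_n -> {set 'I_N}),
     (forall i, is_channel e (C i)) -> lin_indep C ->
     (2 ^ n %| (num_pm e) ^ 2)%N)
  /\ (#|[set C : {set 'I_N} | is_channel e C]| %| (num_pm e) ^ 2)%N.
Proof.
case: HK => K [hKs hdet].
have hK2 := kast_mod2 hKs.
have hm2 : `|\det K|%N = (num_pm e ^ 2)%N by rewrite hdet.
split.
  move=> n C hC hind; rewrite -hm2.
  pose M : 'M['F_2]_(n, N) := \matrix_(i, j) ((id j \in C i)%:R).
  have rf : row_free M.
    by apply: (@indep_rowfree N N id n setT) => // x _; exists x.
  apply: (key rf).
  rewrite hK2; apply/row_matrixP => i; rewrite row_mul row0.
  have -> : row i M = vecg id (C i).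
    by apply/matrixP => a j; rewrite !mxE.
  by apply/eqP; rewrite -is_channel_vec.
set B := row_base (kermx (A2 e)).
have hB : B *m map_mx (intr : int -> 'F_2) K = 0.
  by rewrite hK2; apply/sub_kermxP; rewrite eq_row_base.
have := key (row_base_free _) hB; rewrite hm2.
suff -> : #|[set C : {set 'I_N} | is_channel e C]| = (2 ^ \rank (kermx (A2 e)))%N by [].
have vinj : injective (vecg (@id 'I_N)).
  move=> X Y hXY; apply/setP => x.
  have := congr1 (fun w : 'rV['F_2]_N => w ord0 x) hXY; rewrite !mxE.
  exact: F2bool_inj.
rewrite -(card_imset _ vinj).
have -> : vecg id @: [set C | is_channel e C] =
          [set u *m B | u in [set: 'rV['F_2]_(\rank (kermx (A2 e)))]].
  apply/setP => v; apply/imsetP/imsetP.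
    case=> C; rewrite inE is_channel_vec // => /eqP hC ->.
    have : (vecg id C <= B)%MS by rewrite eq_row_base; apply/sub_kermxP.
    by case/submxP => u ->; exists u; rewrite ?inE.
  case=> u _ ->; exists [set j | (u *m B) 0 j != 0].
    rewrite inE is_channel_vec //; apply/eqP/sub_kermxP.
    have -> : vecg id [set j | (u *m B) 0 j != 0] = u *m B.
      by apply/matrixP => a j; rewrite [a]ord1 /vecg mxE inE -F2_01.
    by apply: submx_trans (submxMl u B) _; rewrite eq_row_base.
  by apply/matrixP => a j; rewrite [a]ord1 /vecg [RHS]mxE inE -F2_01.
rewrite card_imset; last exact: row_free_inj (row_base_free _).
by rewrite cardsT card_mx card_Fp // mul1n.
Qed.

Lemma sum_set (T : finType) (A : {set T}) : (\sum_x (x \in A : nat))%N = #|A|.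
Proof. by rewrite (sum_bool (fun x => x \in A)); apply: eq_card. Qed.

Lemma pair_card N (x y : 'I_N) (p : pred 'I_N) :
  p x != p y -> #|[set x; y] :&: [set v | p v]| = 1%N.
Proof.
case px: (p x); case py: (p y) => // _.
  suff -> : [set x; y] :&: [set v | p v] = [set x] by rewrite cards1.
  apply/setP => z; rewrite !inE; case: (eqVneq z x) => [->|nx] /=; first by rewrite px.
  by case: (eqVneq z y) => [->|] //=; rewrite py.
suff -> : [set x; y] :&: [set v | p v] = [set y] by rewrite cards1.
apply/setP => z; rewrite !inE; case: (eqVneq z y) => [->|ny] /=; first by rewrite py orbT.
by case: (eqVneq z x) => [->|] //=; rewrite px.
Qed.

Lemma pm_card N (M : {set {set 'I_N}}) (P : {set 'I_N}) :
  (forall v, #|[set A in M | v \in A]| = 1%N) ->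
  (forall A, A \in M -> #|A :&: P| = 1%N) -> #|P| = #|M|.
Proof.
move=> hv hA.
transitivity (\sum_v \sum_A ((v \in P) && ((A \in M) && (v \in A)) : nat))%N.
  rewrite -sum_set; apply: eq_bigr => v _.
  case: (v \in P) => /=; last by rewrite big1.
  rewrite sum_bool -(hv v); apply: eq_card => A; by rewrite !inE.
rewrite exchange_big /= -sum_set; apply: eq_bigr => A _.
case AM: (A \in M) => /=; last by rewrite big1 // => v _; rewrite andbF.
rewrite -(hA A AM) -sum_set; apply: eq_bigr => v _; rewrite !inE /=.
by rewrite andbC.
Qed.

Lemma pm_sizes N (e : rel 'I_N) (col : 'I_N -> bool) :
  proper_2col e col -> num_pm e != 0%N -> #|whites col| = #|blacks col|.
Proof.
move=> hc; rewrite -lt0n => /card_gt0P [M]; rewrite inE => /andP [/forall_inP hA /forallP hv].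
have hv' : forall v, #|[set A in M | v \in A]| = 1%N by move=> v; apply/eqP.
have hp : forall p : pred 'I_N, (forall x y, e x y -> p x != p y) ->
    #|[set v | p v]| = #|M|.
  move=> p hp; apply: pm_card hv' _ => A /hA /existsP [x /existsP [y /andP [exy /eqP ->]]].
  exact: pair_card (hp x y exy).
rewrite /whites /blacks (hp (fun v => ~~ col v)) ?(hp col) //.
  by move=> x y /hc; case: (col x); case: (col y).
Qed.

Lemma bipE N (e : rel 'I_N) col a b :
  bip_adj_mx e col a b = (e (enum_val a) (enum_val b))%:R.
Proof. exact: mxE. Qed.

Lemma part3 N (e : rel 'I_N) (He : simple_graph e) :
  (forall col : 'I_N -> bool, proper_2col e col ->
       (exists H, @bip_kasteleyn_signing N e col H) ->
       forall (n : nat) (C : 'I_n -> {set 'I_N}),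
         (forall i, is_channel e (C i) /\ C i \subset blacks col) ->
         lin_indep C ->
         (2 ^ n %| num_pm e)%N).
Proof.
move=> col hc [H [hHs hHdet]] n C hC hind.
case: (eqVneq (num_pm e) 0%N) => [->|nz]; first by rewrite dvdn0.
have weq := pm_sizes hc nz.
pose Kb := (castmx (weq, erefl #|blacks col|) H)^T.
have hdet : `|\det Kb|%N = num_pm e by rewrite det_tr hHdet.
rewrite -hdet.
pose g := fun j : 'I_#|blacks col| => (enum_val j : 'I_N).
pose M : 'M['F_2]_(n, #|blacks col|) := \matrix_(i, j) ((g j \in C i)%:R).
have rf : row_free M.
  apply: (@indep_rowfree N _ g n (blacks col)) => //.
    move=> x xB; exists (enum_rank_in xB x); by rewrite /g enum_rankK_in.
  by move=> i; case: (hC i).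
apply: (key rf).
apply/row_matrixP => i; rewrite row_mul row0.
apply/matrixP => a w; rewrite [a]ord1 !mxE.
have hH2 : forall a b, ((H a b)%:~R : 'F_2) = (e (enum_val a) (enum_val b))%:R.
  move=> a0 b; case: (hHs a0 b) => ->; by rewrite bipE ?mulrNz ?F2opp F2intb.
pose w' := cast_ord (esym weq) w.
have -> : (\sum_b row i M 0 b * (map_mx (intr : int -> 'F_2) Kb) b w) =
          (\sum_b ((g b \in C i) && e (enum_val w') (g b) : nat))%:R.
  rewrite natr_sum; apply: eq_bigr => b _.
  rewrite !mxE castmxE /=.
  have := hH2 (cast_ord (esym weq) w) (cast_ord (esym (erefl #|blacks col|)) b).
  move=> ->; rewrite -natrM mulnb.
  by have -> : cast_ord (esym (erefl #|blacks col|)) b = b by apply: val_inj.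
set w0 := enum_val w'.
have -> : (\sum_b ((g b \in C i) && e w0 (g b) : nat))%N =
          (\sum_(x in blacks col) ((x \in C i) && e w0 x : nat))%N.
  by symmetry; exact: (big_enum_val (fun x : 'I_N => ((x \in C i) && e w0 x : nat))).
rewrite big_mkcond /=.
have -> : (\sum_x (if x \in blacks col then ((x \in C i) && e w0 x : nat) else 0%N))%N =
          #|nbhd e w0 :&: C i|.
  rewrite -sum_set; apply: eq_bigr => x _; rewrite !inE.
  case xC: (x \in C i); last by case: (col x); rewrite /= ?andbF.
  have := subsetP (proj2 (hC i)) x xC; rewrite inE => ->.
  by rewrite andbT.
rewrite F2nat; have := forallP (proj1 (hC i)) w0; by case: (odd _).
Qed.

Local Close Scope ring_scope.

Theorem theorem3p5 (N : nat) (e : rel 'I_N) (He : simple_graph e)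
  (HK : exists K : 'M[int]_N, kasteleyn_signing e K) :
  (forall (n : nat) (C : 'I_n -> {set 'I_N}),
     (forall i, is_channel e (C i)) -> lin_indep C ->
     (2 ^ n %| (num_pm e) ^ 2)%N)
  /\ (#|[set C : {set 'I_N} | is_channel e C]| %| (num_pm e) ^ 2)%N
  /\ (forall col : 'I_N -> bool, proper_2col e col ->
       (exists H, @bip_kasteleyn_signing N e col H) ->
       forall (n : nat) (C : 'I_n -> {set 'I_N}),
         (forall i, is_channel e (C i) /\ C i \subset blacks col) ->
         lin_indep C ->
         (2 ^ n %| num_pm e)%N).
Proof.
have [h1 h2] := part12 He HK.
by split; [exact: h1 | split; [exact: h2 | exact: part3 He]].
Qed.
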